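(* Consider the setting and algorithm described in the context, and assume: (A2) each $\mathcal{L}_j$ is differentiable with $\|\nabla\mathcal{L}_j(x)-\nabla\mathcal{L}_j(y)\|\le L\|x-y\|$ for all $x,y$; (A4-I) there are constants $\delta>0$ and $\tau\ge0$ with $\gamma(\rho)>3L+2L\delta\tau$ and $\rho>\frac{2L\tau}{\delta}$. Then for the iterates of EDANNI, for every $t\ge1$, with $\Delta^{(t)}:=x^{t+1}-x^t$, $\frac{\rho}{2}\|x^{t+1}-x^t\|^2+h(x^{t+1})-\frac{\rho}{2}\|x^t-x^{t-1}\|^2-h(x^t)\le-\Big\langle\nabla\mathcal{L}_1(x^{t+1})+\frac1m\sum_{j=1}^m\nabla\mathcal{L}_j(x^{t_j})-\nabla\mathcal{L}_1(x^{t_1}),\,\Delta^{(t)}\Big\rangle-\frac{\gamma(\rho)}{2}\|\Delta^{(t)}\|^2-\frac{\rho}{2}\|\Delta^{(t-1)}\|^2.$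
   Context: Problem setting: integers $m\ge 2$, $n\ge1$, $p\ge1$. For $j\in[m]$, $i\in[n]$, $l_{ji}:\mathbb{R}^p\to\mathbb{R}$ are smooth (possibly nonconvex) loss functions, and $h:\mathbb{R}^p\to\mathbb{R}\cup\{+\infty\}$ is proper, lower semicontinuous and convex. Let $\mathcal{L}_j(x)=\frac1n\sum_{i\in[n]}l_{ji}(x)$. Machine $1$ is the master. Algorithm EDANNI: given $x^0$ and $\rho\ge0$, at each iteration $t=0,1,\dots$ there is a set $\mathcal{A}_t\subseteq[m]$ of machines whose gradients arrive at iteration $t$, with $\mathcal{A}_0=[m]$; $t_j$ is the latest iteration $s\le t$ with $j\in\mathcal{A}_s$ (with $t_1=t$). The master updates $x^{t+1}=\arg\min_{x}\ \mathcal{L}_1(x)+h(x)+\frac{\rho}{2}\|x-x^t\|^2+\Big\langle \frac1m\sum_{j\in[m]}\nabla\mathcal{L}_j(x^{t_j})-\nabla\mathcal{L}_1(x^{t_1}),\,x-x^t\Big\rangle.$ $\gamma(\rho)$ denotes the convex (strong convexity) modulus of $x\mapsto h(x)+\frac{\rho}{2}\|x-x^t\|^2$. *)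

(* Defs.v *)
From HB Require Import structures.
From mathcomp Require Import all_boot all_order all_algebra.
From mathcomp Require Import all_classical all_reals all_analysis.
Set Implicit Arguments. Unset Strict Implicit. Unset Printing Implicit Defensive.
Import Order.TTheory GRing.Theory Num.Theory.
Import numFieldNormedType.Exports.
Local Open Scope ring_scope.

Section EDANNI.
Context {R : realType} {p : nat}.

Definition dotp (u v : 'rV[R]_p) : R := \sum_(k < p) u 0 k * v 0 k.
Definition sqnorm (u : 'rV[R]_p) : R := dotp u u.
Definition enorm (u : 'rV[R]_p) : R := Num.sqrt (sqnorm u).

Definition grad (f : 'rV[R]_p -> R) (x : 'rV[R]_p) : 'rV[R]_p :=
  \row_(k < p) ('D_(delta_mx 0 k) f x).

(* L_j(x) = (1/n) sum_{i in [n]} l_{ji}(x);  machines/samples 0-indexed. *)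
Definition Lavg (n : nat) (l : nat -> nat -> 'rV[R]_p -> R) (j : nat)
  (x : 'rV[R]_p) : R := n%:R^-1 * \sum_(i < n) l j i x.

Definition econvex (h : 'rV[R]_p -> \bar R) : Prop :=
  forall (x y : 'rV[R]_p) (lam : R), 0 <= lam <= 1 ->
    (h (lam *: x + (1 - lam) *: y)%R <= lam%:E * h x + (1 - lam)%:E * h y)%E.

Definition eproper (h : 'rV[R]_p -> \bar R) : Prop :=
  (forall x, h x != -oo%E) /\ exists x, h x \is a fin_num.

Definition strongly_convex_mod (phi : 'rV[R]_p -> \bar R) (g : R) : Prop :=
  forall (x y : 'rV[R]_p) (lam : R), 0 <= lam <= 1 ->
    (phi (lam *: x + (1 - lam) *: y)%R
      <= lam%:E * phi x + (1 - lam)%:E * phi y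
         - (g / 2 * lam * (1 - lam) * sqnorm (x - y))%:E)%E.

Definition hprox (h : 'rV[R]_p -> \bar R) (rho : R) (c : 'rV[R]_p) :=
  fun x => (h x + (rho / 2 * sqnorm (x - c))%:E)%E.

(* gamma(rho): the strong convexity modulus of x |-> h(x)+rho/2||x-x^t||^2
   (valid for every centre, and the largest such). *)
Definition is_sc_modulus (h : 'rV[R]_p -> \bar R) (rho g : R) : Prop :=
  (forall c, strongly_convex_mod (hprox h rho c) g) /\
  (forall g', (forall c, strongly_convex_mod (hprox h rho c) g') -> g' <= g).

(* Latest iteration s <= t with j in A_s (0 if none, consistent with A_0=[m]). *)
Fixpoint latest (A : nat -> nat -> bool) (j : nat) (t : nat) : nat :=
  match t with
  | 0 => 0
  | s.+1 => if A s.+1 j then s.+1 else latest A j s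
  end.

(* t_j at iteration t; the master is machine index 0 (machine 1 of the paper),
   with t_1 = t. *)
Definition tdel (A : nat -> nat -> bool) (t j : nat) : nat :=
  if j == 0%N then t else latest A j t.

Definition corr (m : nat) (L : nat -> 'rV[R]_p -> R) (A : nat -> nat -> bool)
  (x : nat -> 'rV[R]_p) (t : nat) : 'rV[R]_p :=
  m%:R^-1 *: (\sum_(j < m) grad (L j) (x (tdel A t j)))
  - grad (L 0%N) (x (tdel A t 0%N)).

Definition edanni_obj (m : nat) (L : nat -> 'rV[R]_p -> R)
  (h : 'rV[R]_p -> \bar R) (rho : R) (A : nat -> nat -> bool)
  (x : nat -> 'rV[R]_p) (t : nat) (z : 'rV[R]_p) : \bar R :=
  ((L 0%N z + rho / 2 * sqnorm (z - x t) + dotp (corr m L A x t) (z - x t))%:E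
   + h z)%E.

End EDANNI.

(* Main.v *)
Set Warnings "-notation-overridden,-ambiguous-paths,-notation-incompatible-prefix".
Require Import Defs.
From HB Require Import structures.
From mathcomp Require Import all_boot all_order all_algebra.
From mathcomp Require Import all_classical all_reals all_analysis.
From mathcomp Require Import ring lra.
Import Order.TTheory GRing.Theory Num.Theory.
Import numFieldNormedType.Exports.
Local Open Scope ring_scope.
Local Open Scope classical_set_scope.

Lemma Lavg_diff (R : realType) (p n : nat) (l : nat -> nat -> 'rV[R]_p -> R) j y :
  (forall i (y : 'rV[R]_p), differentiable (l j i) y) -> differentiable (Lavg n l j) y.
Proof.
move=> dl.
have -> : Lavg n l j = n%:R^-1 *: \sum_(i < n) l j i.
  apply/funext => z; rewrite /Lavg /=.
  by rewrite fct_sumE.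
by apply: differentiableZ; apply: differentiable_sum => i; exact: dl.
Qed.

Lemma D_grad (R : realType) (p : nat) (f : 'rV[R]_p -> R) a v :
  differentiable f a -> 'D_v f a = dotp (grad f a) v.
Proof.
move=> df; rewrite deriveE //.
rewrite [in LHS](row_sum_delta v) linear_sum /dotp.
apply: eq_bigr => k _; rewrite linearZ /= mxE -deriveE // mulrC.
by [].
Qed.

Lemma lim_step (R : realType) (V : normedModType R) (f : V -> R) (a v : V) (K c : R) :
  differentiable f a ->
  (forall lam : R, 0 < lam -> lam <= 1 -> K <= lam^-1 * (f (lam *: v + a) - f a) + c * lam) ->
  K <= 'D_v f a.
Proof.
move=> df H.
have hd := @diff_derivable _ _ _ f a v df.
have hc : (fun lam : R => lam^-1 * (f (lam *: v + a) - f a) + c * lam) @ 0^'+ --> 'D_v f a + c * 0.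
  apply: cvgD.
    exact: (cvg_dnbhs_at_right hd).
  apply: cvgMr. apply: cvg_at_right_filter. exact: cvg_id.
rewrite mulr0 addr0 in hc.
apply: (cvgr_to_ge hc).
near=> lam; apply: H.
  by near: lam; exact: nbhs_right_gt.
by near: lam; apply: nbhs_right_ltW; exact: ltr01.
Unshelve. all: by end_near.
Qed.

Section Dot.
Context {R : realType} {p : nat}.
Implicit Types u v w : 'rV[R]_p.
Lemma dotpDl u v w : dotp (u + v) w = dotp u w + dotp v w.
Proof. by rewrite /dotp -big_split; apply: eq_bigr => k _; rewrite !mxE mulrDl. Qed.
Lemma dotpZr u v (k : R) : dotp u (k *: v) = k * dotp u v.
Proof. by rewrite /dotp mulr_sumr; apply: eq_bigr => i _; rewrite !mxE mulrCA. Qed.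
Lemma dotpNr u v : dotp u (- v) = - dotp u v.
Proof. by rewrite -scaleN1r dotpZr mulN1r. Qed.
Lemma sqnorm0 : sqnorm (0 : 'rV[R]_p) = 0.
Proof. by rewrite /sqnorm /dotp big1 // => i _; rewrite mxE mul0r. Qed.
Lemma sqnormN u : sqnorm (- u) = sqnorm u.
Proof. by rewrite /sqnorm /dotp; apply: eq_bigr => i _; rewrite mxE mulrNN. Qed.
End Dot.

Theorem lemma1 (R : realType) (m n p : nat)
  (l : nat -> nat -> 'rV[R]_p -> R) (h : 'rV[R]_p -> \bar R)
  (A : nat -> nat -> bool) (x : nat -> 'rV[R]_p)
  (rho gamma Lc delta tau : R) :
  (2 <= m)%N -> (1 <= n)%N -> (1 <= p)%N ->
  (* smooth losses *)
  (forall j i (y : 'rV[R]_p), differentiable (l j i) y) ->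
  (* h proper, lower semicontinuous, convex *)
  eproper h -> lower_semicontinuous h -> econvex h ->
  0 <= rho ->
  is_sc_modulus h rho gamma ->
  (* A_0 = [m] *)
  (forall j, (j < m)%N -> A 0%N j) ->
  (* EDANNI iterates: x^{t+1} is a minimizer of the master objective *)
  (forall t (z : 'rV[R]_p),
     (edanni_obj m (Lavg n l) h rho A x t (x t.+1)
      <= edanni_obj m (Lavg n l) h rho A x t z)%E) ->
  (* (A2) *)
  (forall j (y z : 'rV[R]_p), (j < m)%N ->
     enorm (grad (Lavg n l j) y - grad (Lavg n l j) z) <= Lc * enorm (y - z)) ->
  (* (A4-I) *)
  0 < delta -> 0 <= tau ->
  gamma > 3 * Lc + 2 * Lc * delta * tau ->
  rho > 2 * Lc * tau / delta ->
  forall t, (1 <= t)%N ->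
    ((rho / 2 * sqnorm (x t.+1 - x t))%:E + h (x t.+1)
     - (rho / 2 * sqnorm (x t - x t.-1))%:E - h (x t)
     <= (- dotp (grad (Lavg n l 0%N) (x t.+1) + corr m (Lavg n l) A x t)
                (x t.+1 - x t)
         - gamma / 2 * sqnorm (x t.+1 - x t)
         - rho / 2 * sqnorm (x t - x t.-1))%:E)%E.
Proof.
move=> _ _ _ dl [hnm [z0 hz0]] _ _ rho0 [hsc _] _ Hmin _ _ _ _ _ t _.
set x1 := x t.+1; set x0 := x t.
set L0 := Lavg n l 0%N; set c := corr m (Lavg n l) A x t.
set D := sqnorm (x1 - x0); set D' := sqnorm (x0 - x t.-1).
have Hm z := Hmin t z; rewrite -/x1 -/x0 -/c in Hm.
have dL0 : differentiable L0 x1 by apply: Lavg_diff.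
case Eh1 : (h x1) => [a| |]; last by move: (hnm x1); rewrite Eh1.
  2: { move: (Hm z0); rewrite /edanni_obj -/x1 Eh1.
       by case: (h z0) hz0 => //= r _; rewrite addey. }
case Eh0 : (h x0) => [b| |]; last by move: (hnm x0); rewrite Eh0.
  2: { by rewrite -!EFinN -!EFinD /= leNye. }
rewrite -!EFinN -!EFinD lee_fin.
have e01 : sqnorm (x0 - x1) = D by rewrite -opprB sqnormN.
have key : rho/2*D + dotp c (x1 - x0) + a - b + gamma/2*D <= 'D_(x0 - x1) L0 x1.
  apply: (@lim_step _ _ L0 x1 (x0 - x1) _ (gamma/2*D) dL0) => lam lam0 lam1.
  set z := lam *: x0 + (1 - lam) *: x1.
  have zE : lam *: (x0 - x1) + x1 = z by apply/rowP => k; rewrite /z !mxE; ring.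
  have zx0 : z - x0 = (1 - lam) *: (x1 - x0) by apply/rowP => k; rewrite /z !mxE; ring.
  have := hsc x0 x0 x1 lam; rewrite -/z.
  rewrite /hprox Eh0 Eh1 subrr sqnorm0 e01 -/D.
  have lam01 : 0 <= lam <= 1 by rewrite ltW.
  move=> /(_ lam01).
  case Ez : (h z) => [e| |]; last by move: (hnm z); rewrite Ez.
    2: { by rewrite -!EFinM -!EFinD addye // leye_eq. }
  rewrite -!EFinM -!EFinD lee_fin => Hc.
  have dz : dotp c (z - x0) = (1-lam) * dotp c (x1-x0) by rewrite zx0 dotpZr.
  move: (Hm z); rewrite /edanni_obj Eh1 Ez -!EFinD lee_fin -/L0 -/x0 -/c dz -/D => Hm'.
  rewrite zE mulr0 addr0 in Hc *.
  set Q := L0 z - L0 x1.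
  have H1 : lam * (rho/2*D + dotp c (x1 - x0) + a - b + gamma/2*D) <= Q + gamma/2*D*lam*lam.
    rewrite /Q; nra.
  rewrite -(ler_pM2l lam0) [X in _ <= X]mulrDr mulVKf ?gt_eqF //.
  lra.
rewrite (@D_grad _ _ L0 x1 (x0 - x1) dL0) in key.
have E : x0 - x1 = - (x1 - x0) by rewrite opprB.
rewrite E dotpNr in key.
rewrite dotpDl; lra.
Qed.
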